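(* Let $A[1..n]$, $n\ge2$, be a uniformly random permutation of $n$ distinct keys, and apply Yaroslavskiy's partitioning procedure (described in the context) to $A[1..n]$, returning $(i_p,i_q)$. Then, conditional on $(i_p,i_q)$, the three subarrays $A[1..i_p-1]$, $A[i_p+1..i_q-1]$ and $A[i_q+1..n]$ after partitioning are, in terms of relative order of their entries, independent uniformly random permutations of their respective sizes.
   Context: Yaroslavskiy's partitioning of $A[\ell_0..r_0]$: compare $A[\ell_0]>A[r_0]$; let $p$ be the smaller and $q$ the larger of these two keys. Set $\ell\gets\ell_0+1$, $g\gets r_0-1$, $k\gets\ell$. While $k\le g$: if $A[k]<p$, swap $A[k],A[\ell]$ and $\ell\gets\ell+1$; else, if $A[k]\ge q$: while ($A[g]>q$ and $k<g$) do $g\gets g-1$; then if $A[g]\ge p$ swap $A[k],A[g]$, else swap $A[k],A[g]$, swap $A[k],A[\ell]$ and $\ell\gets\ell+1$; then $g\gets g-1$. After these cases, $k\gets k+1$. After the loop: $\ell\gets\ell-1$, $g\gets g+1$, $A[\ell_0]\gets A[\ell]$, $A[\ell]\gets p$, $A[r_0]\gets A[g]$, $A[g]\gets q$; return $(\ell,g)$. After partitioning, entries of $A[\ell_0..\ell-1]$ are $<p$, entries of $A[\ell+1..g-1]$ lie strictly between $p$ and $q$, entries of $A[g+1..r_0]$ are $>q$. *)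

(* Defs.v *)
From mathcomp Require Import all_boot all_fingroup.
Set Implicit Arguments. Unset Strict Implicit. Unset Printing Implicit Defensive.

(* Arrays are functions nat -> nat, indexed 1..n as in the paper. *)
Definition arr := nat -> nat.

Definition upd (A : arr) (i v : nat) : arr := fun j => if j == i then v else A j.
Definition swap (A : arr) (i j : nat) : arr := upd (upd A i (A j)) j (A i).

Fixpoint dec_g (fuel : nat) (A : arr) (q k g : nat) : nat :=
  match fuel with
  | 0 => g
  | f.+1 => if (q < A g) && (k < g) then dec_g f A q k g.-1 else g
  end.

Fixpoint yloop (fuel : nat) (A : arr) (p q l g k : nat) : arr * nat * nat :=
  match fuel with
  | 0 => (A, l, g)
  | f.+1 =>
    if k <= g then
      if A k < p then yloop f (swap A k l) p q l.+1 g k.+1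
      else if q <= A k then
        let g' := dec_g fuel A q k g in
        if p <= A g' then yloop f (swap A k g') p q l g'.-1 k.+1
        else yloop f (swap (swap A k g') k l) p q l.+1 g'.-1 k.+1
      else yloop f A p q l g k.+1
    else (A, l, g)
  end.

Definition yaroslavskiy (A : arr) (l0 r0 : nat) : arr * nat * nat :=
  let p := minn (A l0) (A r0) in
  let q := maxn (A l0) (A r0) in
  let '(A1, l1, g1) := yloop (r0 - l0).+1 A p q l0.+1 r0.-1 l0.+1 in
  let l := l1.-1 in
  let g := g1.+1 in
  let A2 := upd A1 l0 (A1 l) in
  let A3 := upd A2 l p in
  let A4 := upd A3 r0 (A3 g) in
  let A5 := upd A4 g q in
  (A5, l, g).

(* The input array A[1..n] holding the distinct keys pi(0), ..., pi(n-1). *)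
Definition arr_of_perm (n : nat) (pi : {perm 'I_n}) : arr :=
  fun i => nth 0 [seq val (pi j) | j <- enum 'I_n] i.-1.

Definition subarr (A : arr) (a m : nat) : seq nat := [seq A k | k <- iota a m].

(* relative order (standardization): each entry replaced by its rank *)
Definition relorder (s : seq nat) : seq nat := [seq count (fun y => y < x) s | x <- s].

Definition ypart (n : nat) (pi : {perm 'I_n}) : nat * nat :=
  let '(_, ip, iq) := yaroslavskiy (arr_of_perm pi) 1 n in (ip, iq).

Definition ypatterns (n : nat) (pi : {perm 'I_n}) : seq nat * seq nat * seq nat :=
  let '(A, ip, iq) := yaroslavskiy (arr_of_perm pi) 1 n in
  (relorder (subarr A 1 (ip - 1)),
   relorder (subarr A ip.+1 (iq - ip - 1)),
   relorder (subarr A iq.+1 (n - iq))).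

(* Main.v *)
Require Import Defs.
From mathcomp Require Import all_boot all_fingroup.
From mathcomp Require Import zify.
Set Implicit Arguments. Unset Strict Implicit. Unset Printing Implicit Defensive.

Lemma swapE (A : arr) i j x :
  swap A i j x = if x == j then A i else if x == i then A j else A x.
Proof. by []. Qed.

Lemma updE (A : arr) i v x : upd A i v x = if x == i then v else A x.
Proof. by []. Qed.

Lemma dec_g_spec f (A : arr) q k g : k <= g -> g <= k + f ->
  [/\ k <= dec_g f A q k g, dec_g f A q k g <= g,
      (forall j, dec_g f A q k g < j <= g -> q < A j) &
      (dec_g f A q k g = k \/ A (dec_g f A q k g) <= q)].
Proof.
elim: f g => [|f IH] g /= kg gf.
  have -> : g = k by lia.
  by split => //; [move=> j; lia | left].
case: ifP => [/andP[qA kg'] | H].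
  have [h1 h2 h3 h4] := IH g.-1 ltac:(lia) ltac:(lia).
  split => //; first lia.
  move=> j /andP[j1 j2]; have [->|ne] := eqVneq j g => //.
  by apply: h3; lia.
split => //; first by move=> j; lia.
case: (ltnP k g) => kg2; last by left; lia.
by right; move: H; rewrite kg2 andbT => /negbT; rewrite -leqNgt.
Qed.

Definition injon n (A : arr) := forall i j, 1 <= i <= n -> 1 <= j <= n -> A i = A j -> i = j.
Definition rngon n (A : arr) := forall j, 1 <= j <= n -> A j < n.

Lemma swap_injon n A i j : 1 <= i <= n -> 1 <= j <= n -> injon n A -> injon n (swap A i j).
Proof.
move=> hi hj hA x y hx hy; rewrite !swapE.
case: eqP => ex; case: eqP => ey; try (move=> /hA; lia);
  (case: eqP => ex'; try (move=> /hA; lia));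
  (case: eqP => ey'; move=> /hA; lia).
Qed.

Lemma swap_rngon n A i j : 1 <= i <= n -> 1 <= j <= n -> rngon n A -> rngon n (swap A i j).
Proof.
move=> hi hj hA x hx; rewrite !swapE.
by case: eqP => _; [apply: hA | case: eqP => _; apply: hA].
Qed.
Record inv (n : nat) (A0 A : arr) (p q l g k f : nat) : Prop := Inv {
  i_l : 2 <= l; i_lk : l <= k; i_lg : l <= g.+1; i_g : g <= n.-1; i_f : g.+2 <= k + f;
  i_1 : A 1 = A0 1; i_n : A n = A0 n;
  i_inj : injon n A; i_rng : rngon n A;
  i_S : forall j, 2 <= j < l -> A j < p;
  i_M : forall j, l <= j -> j < k -> j <= g -> p <= A j <= q;
  i_L : forall j, g < j <= n.-1 -> q <= A j }.

Record post (n : nat) (A0 A : arr) (p q l g : nat) : Prop := Post {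
  o_l : 2 <= l; o_lg : l <= g.+1; o_g : g <= n.-1;
  o_1 : A 1 = A0 1; o_n : A n = A0 n;
  o_inj : injon n A; o_rng : rngon n A;
  o_S : forall j, 2 <= j < l -> A j < p;
  o_M : forall j, l <= j <= g -> p <= A j <= q;
  o_L : forall j, g < j <= n.-1 -> q <= A j }.

Lemma exit_post n A0 A p q l g k f : inv n A0 A p q l g k f -> g < k -> post n A0 A p q l g.
Proof.
case=> *; split => // j /andP[? ?]; match goal with H : forall j, _ -> _ -> _ -> _ |- _ => apply: H end; lia.
Qed.

Ltac cases := rewrite ?swapE; repeat (case: eqP => ?); try lia.
Ltac fin := match goal with
 | |- _ => lia
 | H : forall j : nat, _ |- _ => apply: H; lia
 | H : forall j : nat, _ |- _ => apply: ltnW; apply: H; lia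
 | H : _ \/ _ |- _ => case: H => ?; lia
 end.

Lemma yloop_post n A0 p q : p <= q -> forall f A l g k,
  inv n A0 A p q l g k f ->
  let: (A1, l1, g1) := yloop f A p q l g k in post n A0 A1 p q l1 g1.
Proof.
move=> pq; elim=> [|f IH] A l g k I /=.
  by apply: (exit_post I); have := i_f I; lia.
case: (leqP k g) => kg; last by apply: (exit_post I).
case: I => il ilk ilg ig iff i1 in_ iinj irng iS iM iL.
case: ifP => [Akp|/negbT Akp].
  apply: IH; split; try lia.
  - by cases.
  - by cases.
  - by apply: swap_injon => //; lia.
  - by apply: swap_rngon => //; lia.
  - move=> j hj; cases; apply: iS; lia.
  - move=> j h1 h2 h3; cases; apply: iM; lia.
  - move=> j hj; cases; apply: iL; lia.
case: ifP => [qAk|/negbT qAk].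
  have [d1 d2 d3 d4] := @dec_g_spec f.+1 A q k g kg ltac:(lia).
  set g' := dec_g f.+1 A q k g in d1 d2 d3 d4 *.
  have Eg : (if (q < A g) && (k < g) then dec_g f A q k g.-1 else g) = g' by [].
  rewrite Eg.
  case: ifP => [pAg|/negbT pAg].
    apply: IH; split; try lia.
    - by cases.
    - by cases.
    - by apply: swap_injon => //; lia.
    - by apply: swap_rngon => //; lia.
    - move=> j hj; cases; fin.
    - move=> j h1 h2 h3; cases; fin.
    - move=> j hj; cases; case: (leqP j g) => ?; fin.
  have kg' : k < g'.
    case: (ltnP k g') => // h; have eg : g' = k by lia.
    by move: pAg; rewrite eg; lia.
  apply: IH; split; try lia.
  - by cases.
  - by cases.
  - by apply: swap_injon; [lia|lia|apply: swap_injon; [lia|lia|done]].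
  - by apply: swap_rngon; [lia|lia|apply: swap_rngon; [lia|lia|done]].
  - move=> j hj; cases; fin.
  - move=> j h1 h2 h3; cases; fin.
  - move=> j hj; cases; case: (leqP j g) => ?; fin.
apply: IH; split; try lia; try done.
move=> j h1 h2 h3; case: (ltnP j k) => jk; first by apply: iM.
have -> : j = k by lia.
lia.
Qed.

Definition fin_arr (A1 : arr) (l g n p q : nat) : arr :=
  let A2 := upd A1 1 (A1 l) in let A3 := upd A2 l p in
  let A4 := upd A3 n (A3 g) in upd A4 g q.

Lemma yarE A n : yaroslavskiy A 1 n =
  let: (A1, l1, g1) := yloop (n - 1).+1 A (minn (A 1) (A n)) (maxn (A 1) (A n)) 2 n.-1 2 in
  (fin_arr A1 l1.-1 g1.+1 n (minn (A 1) (A n)) (maxn (A 1) (A n)), l1.-1, g1.+1).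
Proof. by rewrite /yaroslavskiy; case: yloop => [[]]. Qed.

Lemma blockP n (Y : arr) a len m0 m : injon n Y -> 1 <= a -> a + len <= n.+1 ->
  (forall j, a <= j < a + len -> m0 <= Y j < m0 + m) ->
  (forall x, m0 <= x < m0 + m -> exists2 j, a <= j < a + len & Y j = x) ->
  perm_eq (subarr Y a len) (iota m0 m).
Proof.
move=> inj a1 al h1 h2; apply: uniq_perm; last 1 first.
- move=> x; rewrite mem_iota; apply/mapP/idP.
    by case=> j; rewrite mem_iota => /h1 hj ->.
  by move=> /h2 [j hj <-]; exists j; rewrite // mem_iota.
- rewrite map_inj_in_uniq ?iota_uniq //.
  move=> i j; rewrite !mem_iota => hi hj /inj; apply; lia.
- exact: iota_uniq.
Qed.

Lemma surj_of_inj n (Y : arr) : injon n Y -> rngon n Y ->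
  forall x, x < n -> exists2 j, 1 <= j <= n & Y j = x.
Proof.
move=> inj rng.
have U : uniq (subarr Y 1 n).
  rewrite map_inj_in_uniq ?iota_uniq //.
  move=> i j; rewrite !mem_iota => hi hj /inj; apply; lia.
have [_ E] := uniq_min_size U (s2 := iota 0 n)
  ltac:(move=> x /mapP [j]; rewrite !mem_iota => hj ->; apply: rng; lia)
  ltac:(by rewrite size_map !size_iota).
move=> x xn; have : x \in subarr Y 1 n by rewrite E mem_iota.
by case/mapP => j; rewrite mem_iota => hj ->; exists j => //; lia.
Qed.

Lemma yar_correct n (A Y : arr) l g : 2 <= n -> injon n A -> rngon n A ->
  yaroslavskiy A 1 n = (Y, l, g) ->
  let p := minn (A 1) (A n) in let q := maxn (A 1) (A n) in
  [/\ l = p.+1, g = q.+1, p < q, q < n &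
   [/\ perm_eq (subarr Y 1 (l - 1)) (iota 0 p),
       perm_eq (subarr Y l.+1 (g - l - 1)) (iota p.+1 (q - p - 1)) &
       perm_eq (subarr Y g.+1 (n - g)) (iota q.+1 (n - g))]].
Proof.
move=> n2 injA rngA; rewrite yarE.
set p := minn (A 1) (A n); set q := maxn (A 1) (A n).
have pq : p <= q by rewrite /p /q; lia.
have I : inv n A A p q 2 n.-1 2 (n - 1).+1.
  by split => //; try lia; move=> j; lia.
have := yloop_post pq I.
case: yloop => [[A1 l1] g1] [ol olg og o1 on oinj orng oS oM oL] [<- <- <-].
have A1n : A 1 != A n by apply/eqP => /injA; lia.
have pq' : p < q by rewrite /p /q; move: A1n; lia.
have Pv : p = A1 1 \/ p = A1 n by rewrite o1 on /p; lia.
have Qv : q = A1 1 \/ q = A1 n by rewrite o1 on /q; lia.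
have npq : forall x, 2 <= x <= n.-1 -> A1 x <> p /\ A1 x <> q.
  move=> x hx; split=> E.
    by case: Pv => E'; rewrite E' in E; move/oinj: E; lia.
  by case: Qv => E'; rewrite E' in E; move/oinj: E; lia.
have pn : p < n by case: Pv => ->; apply: orng; lia.
have qn : q < n by case: Qv => ->; apply: orng; lia.
set Y' := fin_arr _ _ _ _ _ _.
pose rho j := if j == 1 then (l1.-1) else if j == n then (g1.+1) else j.
have Yl : Y' (l1.-1) = p by rewrite /Y' /fin_arr !updE; repeat (case: eqP => ?; try lia).
have Yg : Y' (g1.+1) = q by rewrite /Y' /fin_arr !updE; repeat (case: eqP => ?; try lia).
have Yr : forall j, 1 <= j <= n -> j != (l1.-1) -> j != (g1.+1) -> Y' j = A1 (rho j) /\ 2 <= rho j <= n.-1.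
  move=> j hj /eqP jl /eqP jg; rewrite /Y' /fin_arr /rho !updE.
  by repeat (case: eqP => ?; try lia).
have c1 : forall j, 1 <= j < (l1.-1) -> Y' j < p.
  move=> j hj; have [-> hr] := Yr j ltac:(lia) ltac:(apply/eqP; lia) ltac:(apply/eqP; lia).
  apply: oS; move: hr; rewrite /rho; repeat (case: eqP => ?); lia.
have c3 : forall j, (l1.-1) < j < (g1.+1) -> p < Y' j < q.
  move=> j hj; have [-> hr] := Yr j ltac:(lia) ltac:(apply/eqP; lia) ltac:(apply/eqP; lia).
  have := npq (rho j) hr; have : l1 <= rho j <= g1.
    by move: hr; rewrite /rho; repeat (case: eqP => ?); lia.
  by move/oM; lia.
have c5 : forall j, (g1.+1) < j <= n -> q < Y' j.
  move=> j hj; have [-> hr] := Yr j ltac:(lia) ltac:(apply/eqP; lia) ltac:(apply/eqP; lia).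
  have := npq (rho j) hr; have : g1 < rho j <= n.-1.
    by move: hr; rewrite /rho; repeat (case: eqP => ?); lia.
  by move/oL; lia.
have key : forall x, 1 <= x <= n -> (x = l1.-1 /\ Y' x = p) \/ (x = g1.+1 /\ Y' x = q) \/
    (x <> l1.-1 /\ x <> g1.+1 /\ Y' x = A1 (rho x) /\ 2 <= rho x <= n.-1).
  move=> x hx; case: (eqVneq x (l1.-1)) => [E|xl]; first by left; rewrite E.
  case: (eqVneq x (g1.+1)) => [E|xg]; first by right; left; rewrite E.
  have [h1 h2] := Yr x hx xl xg; right; right; split; [exact/eqP|split; [exact/eqP|by split]].
have injY : injon n Y'.
  move=> i j hi hj E.
  case: (key i hi) => [[Ei Yi]|[[Ei Yi]|[il [ig [Yi hri]]]]];
  case: (key j hj) => [[Ej Yj]|[[Ej Yj]|[jl [jg [Yj hrj]]]]]; try lia;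
  rewrite ?Yi ?Yj in E; try (have := npq _ hri; rewrite -E; lia);
  try (have := npq _ hrj; rewrite E; lia).
  move/oinj: E => E; have {}E := E ltac:(lia) ltac:(lia).
  move: E il ig jl jg; rewrite /rho; repeat (case: eqP => ?); lia.
have rngY : rngon n Y'.
  move=> j hj; case: (eqVneq j (l1.-1)) => [->|jl]; first by rewrite Yl.
  case: (eqVneq j (g1.+1)) => [->|jg]; first by rewrite Yg.
  have [-> hr] := Yr j hj jl jg; apply: orng; lia.
have sj := surj_of_inj injY rngY.
have B1 : perm_eq (subarr Y' 1 ((l1.-1) - 1)) (iota 0 p).
  apply: blockP injY _ _ _ _; try lia.
    by move=> j hj; have := c1 j; lia.
  move=> x hx; have [j hj Ej] := sj x ltac:(lia); exists j => //.
  case: (ltnP j (l1.-1)) => jl; first lia.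
  case: (eqVneq j (l1.-1)) => [E|jl2]; first by move: Ej; rewrite E Yl; lia.
  case: (ltnP j (g1.+1)) => jg; first by have := c3 j; lia.
  case: (eqVneq j (g1.+1)) => [E|jg2]; first by move: Ej; rewrite E Yg; lia.
  by have := c5 j; lia.
have s1 := perm_size B1; rewrite size_map !size_iota in s1.
have B2 : perm_eq (subarr Y' (l1.-1).+1 ((g1.+1) - (l1.-1) - 1)) (iota p.+1 (q - p - 1)).
  apply: blockP injY _ _ _ _; try lia.
    by move=> j hj; have := c3 j; lia.
  move=> x hx; have [j hj Ej] := sj x ltac:(lia); exists j => //.
  case: (ltnP j (l1.-1)) => jl; first by have := c1 j; lia.
  case: (eqVneq j (l1.-1)) => [E|jl2]; first by move: Ej; rewrite E Yl; lia.
  case: (ltnP j (g1.+1)) => jg; first lia.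
  case: (eqVneq j (g1.+1)) => [E|jg2]; first by move: Ej; rewrite E Yg; lia.
  by have := c5 j; lia.
have s2 := perm_size B2; rewrite size_map !size_iota in s2.
have B3 : perm_eq (subarr Y' (g1.+1).+1 (n - (g1.+1))) (iota q.+1 (n - (g1.+1))).
  apply: blockP injY _ _ _ _; try lia.
    by move=> j hj; have := c5 j; have := rngY j; lia.
  move=> x hx; have [j hj Ej] := sj x ltac:(lia); exists j => //.
  case: (ltnP j (l1.-1)) => jl; first by have := c1 j; lia.
  case: (eqVneq j (l1.-1)) => [E|jl2]; first by move: Ej; rewrite E Yl; lia.
  case: (ltnP j (g1.+1)) => jg; first by have := c3 j; lia.
  case: (eqVneq j (g1.+1)) => [E|jg2]; first by move: Ej; rewrite E Yg; lia.
  lia.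
split => //; lia.
Qed.

Definition agree n (sig : nat -> nat) (A B : arr) := forall j, 1 <= j <= n -> B j = sig (A j).

Lemma dec_g_eqv n sig (A B : arr) q f k g : agree n sig A B -> 1 <= k -> g <= n ->
  (forall x, (q < sig x) = (q < x)) -> dec_g f B q k g = dec_g f A q k g.
Proof.
move=> ag k1 gn hq; elim: f g gn => [|f IH] g gn //=.
case: (ltnP k g) => kg; last by rewrite !andbF.
by rewrite ag ?hq; [rewrite IH //; lia | lia].
Qed.

Lemma dec_g_range f (A : arr) q k g : k <= g ->
  k <= dec_g f A q k g <= g.
Proof.
elim: f g => [|f IH] g /= kg; first lia.
case: ifP => [/andP[_ kg']|]; last lia.
have := IH g.-1 ltac:(lia); lia.
Qed.

Lemma swap_agree n sig A B i j : agree n sig A B -> 1 <= i <= n -> 1 <= j <= n ->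
  agree n sig (swap A i j) (swap B i j).
Proof.
move=> ag hi hj x hx; rewrite !swapE.
by case: eqP => _; [apply: ag | case: eqP => _; apply: ag].
Qed.

Lemma yloop_eqv n sig p q : (forall x, (sig x < p) = (x < p)) ->
  (forall x, (sig x < q) = (x < q)) -> (forall x, (q < sig x) = (q < x)) ->
  forall f A B l g k, agree n sig A B -> 1 <= l <= k -> g <= n.-1 ->
  let: (A', l', g') := yloop f A p q l g k in
  let: (B', l'', g'') := yloop f B p q l g k in
  [/\ l'' = l', g'' = g' & agree n sig A' B'].
Proof.
move=> hp hq hq2; elim=> [|f IH] A B l g k ag hl hg //=.
case: (leqP k g) => kg //.
have hk : 1 <= k <= n by lia.
have hq' : forall x, (q <= sig x) = (q <= x) by move=> x; rewrite leqNgt [RHS]leqNgt hq.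
rewrite ag // hp hq'.
have /andP[d1 d2] := @dec_g_range f.+1 A q k g kg.
have E : dec_g f.+1 B q k g = dec_g f.+1 A q k g by apply: (dec_g_eqv _ ag) => //; lia.
rewrite -/(dec_g f.+1 B q k g) -/(dec_g f.+1 A q k g) E.
set g' := dec_g f.+1 A q k g in d1 d2 E *.
rewrite ag; last lia.
have hp' : forall x, (p <= sig x) = (p <= x) by move=> x; rewrite leqNgt [RHS]leqNgt hp.
rewrite hp'.
case: ifP => _.
  apply: IH; [apply: swap_agree => //; lia | lia | lia].
case: ifP => _.
  case: ifP => _.
    apply: IH; [apply: swap_agree => //; lia | lia | lia].
  apply: IH; [apply: swap_agree; [apply: swap_agree|..] => //; lia | lia | lia].
by apply: IH; [ | lia | lia].
Qed.

Lemma fin_agree n sig A B l g p q : agree n sig A B -> sig p = p -> sig q = q ->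
  1 <= l <= n -> 1 <= g <= n ->
  agree n sig (fin_arr A l g n p q) (fin_arr B l g n p q).
Proof.
move=> ag sp sq hl hg j hj; rewrite /fin_arr !updE.
repeat (case: eqP => ?); rewrite ?sp ?sq //; apply: ag; lia.
Qed.

Lemma yar_eqv n sig (A B Y : arr) l g : 2 <= n -> injon n A -> rngon n A ->
  agree n sig A B -> sig (A 1) = A 1 -> sig (A n) = A n ->
  (forall x, (sig x < minn (A 1) (A n)) = (x < minn (A 1) (A n))) ->
  (forall x, (sig x < maxn (A 1) (A n)) = (x < maxn (A 1) (A n))) ->
  (forall x, (maxn (A 1) (A n) < sig x) = (maxn (A 1) (A n) < x)) ->
  yaroslavskiy A 1 n = (Y, l, g) ->
  exists2 Y', yaroslavskiy B 1 n = (Y', l, g) & agree n sig Y Y'.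
Proof.
move=> n2 injA rngA ag s1 sn hp hq hq2 E.
have [El Eg _ qn _] := yar_correct n2 injA rngA E.
move: E; rewrite !yarE.
have -> : B 1 = A 1 by rewrite ag ?s1 //; lia.
have -> : B n = A n by rewrite ag ?sn //; lia.
have := @yloop_eqv n sig _ _ hp hq hq2 (n - 1).+1 A B 2 n.-1 2 ag ltac:(lia) (leqnn n.-1).
case: (yloop _ A _ _ _ _ _) => [[A1 l1] g1].
case: (yloop _ B _ _ _ _ _) => [[B1 l1'] g1'] [-> -> ag1] [EY E1 E2].
exists (fin_arr B1 l1.-1 g1.+1 n (minn (A 1) (A n)) (maxn (A 1) (A n))); first by rewrite E1 E2.
subst Y; apply: fin_agree => //.
- by rewrite /minn; case: ifP.
- by rewrite /maxn; case: ifP.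
- lia.
- lia.
Qed.

Lemma count_lt_iota x m0 m : count (fun y => y < x) (iota m0 m) = minn (x - m0) m.
Proof.
elim: m m0 => [|m IH] m0 /=; first by rewrite minn0.
rewrite IH; case: (ltnP m0 x) => h /=; lia.
Qed.

Lemma relorder_iota w m0 m : perm_eq w (iota m0 m) -> relorder w = map (subn^~ m0) w.
Proof.
move=> P; apply/eq_in_map => x xw.
have : x \in iota m0 m by rewrite -(perm_mem P).
rewrite mem_iota => hx.
move/seq.permP: P => C; by rewrite C count_lt_iota; lia.
Qed.

Lemma perm_iota_of (s : seq nat) m0 m : uniq s -> size s = m ->
  (forall x, x \in s -> m0 <= x < m0 + m) -> perm_eq s (iota m0 m).
Proof.
move=> u sz b.
have [_ E] := uniq_min_size u (s2 := iota m0 m)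
  ltac:(by move=> x /b; rewrite mem_iota) ltac:(by rewrite size_iota sz).
by apply: uniq_perm => //; apply: iota_uniq.
Qed.

Lemma aop_ord n (pi : {perm 'I_n}) (i : 'I_n) : arr_of_perm pi i.+1 = val (pi i).
Proof.
by rewrite /arr_of_perm /= (nth_map i) ?size_enum_ord // nth_ord_enum.
Qed.

Lemma aop_at n (pi : {perm 'I_n}) j : 1 <= j <= n ->
  exists i : 'I_n, j = i.+1.
Proof.
move=> hj; have hi : j.-1 < n by lia.
by exists (Ordinal hi) => /=; lia.
Qed.

Lemma aop_injon n (pi : {perm 'I_n}) : injon n (arr_of_perm pi).
Proof.
move=> i j hi hj; have [i' Ei] := aop_at pi hi; have [j' Ej] := aop_at pi hj.
rewrite Ei Ej !aop_ord => /val_inj/perm_inj ->; done.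
Qed.

Lemma aop_rngon n (pi : {perm 'I_n}) : rngon n (arr_of_perm pi).
Proof. by move=> j hj; have [i ->] := aop_at pi hj; rewrite aop_ord ltn_ord. Qed.

Definition ext m (h : {perm 'I_m}) (x : nat) : nat :=
  if (insub x : option 'I_m) is Some i then val (h i) else x.

Lemma ext_ord m (h : {perm 'I_m}) (i : 'I_m) : ext h i = h i.
Proof. by rewrite /ext valK. Qed.

Lemma ext_ge m (h : {perm 'I_m}) x : m <= x -> ext h x = x.
Proof. by move=> hx; rewrite /ext insubF //; apply/negbTE; rewrite -leqNgt. Qed.

Lemma ext_lt m (h : {perm 'I_m}) x : x < m -> ext h x < m.
Proof. by move=> hx; rewrite /ext (insubT (fun x => x < m) hx) /= ltn_ord. Qed.

Lemma ext_mul m (h h' : {perm 'I_m}) x : ext (h * h') x = ext h' (ext h x).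
Proof.
case: (ltnP x m) => hx; last by rewrite !ext_ge.
by rewrite /ext (insubT (fun x => x < m) hx) /= valK permM.
Qed.

Lemma ext1 m x : ext (1 : {perm 'I_m}) x = x.
Proof.
case: (ltnP x m) => hx; last by rewrite !ext_ge.
by rewrite /ext (insubT (fun x => x < m) hx) perm1.
Qed.

Lemma ext_inv m (h : {perm 'I_m}) x : ext h^-1 (ext h x) = x.
Proof. by rewrite -ext_mul mulgV ext1. Qed.

Lemma ext_inj m (h : {perm 'I_m}) : injective (ext h).
Proof. by move=> x y E; rewrite -(ext_inv h x) E ext_inv. Qed.

Definition H3 a b c := ({perm 'I_a} * {perm 'I_b} * {perm 'I_c})%type.

Definition sig a b c (h : H3 a b c) (x : nat) : nat :=
  if x < a then ext h.1.1 x
  else if x == a then x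
  else if x < a + b + 1 then ext h.1.2 (x - a.+1) + a.+1
  else if x == a + b + 1 then x
  else ext h.2 (x - (a + b + 2)) + (a + b + 2).

Definition hinv a b c (h : H3 a b c) : H3 a b c := (h.1.1^-1, h.1.2^-1, h.2^-1)%g.

Section S.
Variables a b c : nat.
Implicit Type h : H3 a b c.

Lemma sig_reg h x :
  [/\ x < a -> sig h x = ext h.1.1 x /\ sig h x < a,
      x = a -> sig h x = a,
      a < x < a + b + 1 -> sig h x = ext h.1.2 (x - a.+1) + a.+1 /\ a < sig h x < a + b + 1,
      x = a + b + 1 -> sig h x = x &
      a + b + 1 < x -> sig h x = ext h.2 (x - (a + b + 2)) + (a + b + 2) /\ a + b + 1 < sig h x].
Proof.
rewrite /sig; split.
- move=> hx; rewrite hx; split => //; exact: ext_lt.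
- move=> ->; rewrite ltnn eqxx //.
- move=> hx; have -> : (x < a) = false by lia.
  have -> : (x == a) = false by lia.
  rewrite (_ : x < a + b + 1); last lia.
  split => //; have := @ext_lt _ h.1.2 (x - a.+1) ltac:(lia); lia.
- move=> ->; have -> : (a + b + 1 < a) = false by lia.
  have -> : (a + b + 1 == a) = false by lia.
  by rewrite ltnn eqxx.
- move=> hx; have -> : (x < a) = false by lia.
  have -> : (x == a) = false by lia.
  have -> : (x < a + b + 1) = false by lia.
  have -> : (x == a + b + 1) = false by lia.
  split => //; lia.
Qed.

Lemma sig_K h x : sig (hinv h) (sig h x) = x.
Proof.
have [r1 r2 r3 r4 r5] := sig_reg h x.
have [s1 s2 s3 s4 s5] := sig_reg (hinv h) (sig h x).
case: (ltnP x a) => h1.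
  have [e1 e2] := r1 h1; have [e3 _] := s1 e2; by rewrite e3 e1 ext_inv.
case: (eqVneq x a) => [ex|h2].
  by have e := r2 ex; rewrite s2 // ex.
case: (ltnP x (a + b + 1)) => h3.
  have [e1 e2] := r3 ltac:(lia); have [e3 _] := s3 e2.
  rewrite e3 e1 addnK ext_inv; lia.
case: (eqVneq x (a + b + 1)) => [ex|h4].
  by have e := r4 ex; rewrite s4 ?e // ex.
have [e1 e2] := r5 ltac:(lia); have [e3 _] := s5 e2.
rewrite e3 e1 addnK ext_inv; lia.
Qed.

Lemma hinvK h : hinv (hinv h) = h.
Proof. by case: h => [[h1 h2] h3]; rewrite /hinv /= !invgK. Qed.

Lemma sig_Kr h x : sig h (sig (hinv h) x) = x.
Proof. by rewrite -{1}(hinvK h) sig_K. Qed.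

Lemma sig_inj h : injective (sig h).
Proof. by move=> x y E; rewrite -(sig_K h x) E sig_K. Qed.

Lemma sig_fix_a h : sig h a = a.
Proof. by have [_ r _ _ _] := sig_reg h a; apply: r. Qed.

Lemma sig_fix_q h : sig h (a + b + 1) = a + b + 1.
Proof. by have [_ _ _ r _] := sig_reg h (a + b + 1); apply: r. Qed.

Lemma sig_cmp h x :
  [/\ (sig h x < a) = (x < a), (sig h x < a + b + 1) = (x < a + b + 1) &
      (a + b + 1 < sig h x) = (a + b + 1 < x)].
Proof.
have [r1 r2 r3 r4 r5] := sig_reg h x.
case: (ltnP x a) => h1.
  have [_ e] := r1 h1; split; lia.
case: (eqVneq x a) => [ex|h2].
  rewrite r2 //; split; lia.
case: (ltnP x (a + b + 1)) => h3.
  have [_ e] := r3 ltac:(lia); split; lia.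
case: (eqVneq x (a + b + 1)) => [ex|h4].
  rewrite r4 //; split; lia.
have [_ e] := r5 ltac:(lia); split; lia.
Qed.

Lemma sig_lt h x : x < a + b + c + 2 -> sig h x < a + b + c + 2.
Proof.
move=> hx; have [r1 r2 r3 r4 r5] := sig_reg h x.
case: (ltnP x a) => h1; first by have [_ e] := r1 h1; lia.
case: (eqVneq x a) => [ex|h2]; first by rewrite r2 //; lia.
case: (ltnP x (a + b + 1)) => h3; first by have [_ e] := r3 ltac:(lia); lia.
case: (eqVneq x (a + b + 1)) => [ex|h4]; first by rewrite r4 //; lia.
have [e _] := r5 ltac:(lia); rewrite e.
have := @ext_lt _ h.2 (x - (a + b + 2)) ltac:(lia); lia.
Qed.

End S.

Definition sigf a b c n (Hn : a + b + c + 2 = n) (h : H3 a b c) (i : 'I_n) : 'I_n :=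
  Ordinal (etrans (f_equal (fun m => sig h i < m) (esym Hn))
             (sig_lt h (etrans (f_equal (fun m => val i < m) Hn) (ltn_ord i)))).

Lemma sigf_inj a b c n (Hn : a + b + c + 2 = n) (h : H3 a b c) : injective (sigf Hn h).
Proof. by move=> i j /(congr1 val) /= /sig_inj /val_inj. Qed.

Definition sigp a b c n (Hn : a + b + c + 2 = n) (h : H3 a b c) : {perm 'I_n} :=
  perm (@sigf_inj a b c n Hn h).

Lemma sigp_val a b c n (Hn : a + b + c + 2 = n) (h : H3 a b c) (i : 'I_n) :
  val (sigp Hn h i) = sig h (val i).
Proof. by rewrite /sigp permE. Qed.

Lemma sigp_hinv a b c n (Hn : a + b + c + 2 = n) (h : H3 a b c) :
  (sigp Hn (hinv h) * sigp Hn h = 1)%g.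
Proof. by apply/permP => i; apply: val_inj; rewrite permM perm1 !sigp_val sig_Kr. Qed.

Definition act a b c (h : H3 a b c) (t : seq nat * seq nat * seq nat) :=
  (map (ext h.1.1) t.1.1, map (ext h.1.2) t.1.2, map (ext h.2) t.2).

Lemma relorder_shift w m0 m (f : nat -> nat) : perm_eq w (iota m0 m) ->
  (forall x, x < m -> f x < m) -> injective f ->
  relorder (map (fun x => f (x - m0) + m0) w) = map f (relorder w).
Proof.
move=> P fb fi.
have bw : forall x, x \in w -> m0 <= x < m0 + m by move=> x; rewrite (perm_mem P) mem_iota.
have Pv : perm_eq (map (fun x => f (x - m0) + m0) w) (iota m0 m).
  apply: perm_iota_of.
  - rewrite map_inj_in_uniq; first by rewrite (perm_uniq P) iota_uniq.
    move=> x y hx hy /addIn /fi; have := bw x hx; have := bw y hy; lia.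
  - by rewrite size_map (perm_size P) size_iota.
  - move=> x /mapP [y /bw hy ->]; have := fb (y - m0) ltac:(lia); lia.
rewrite (relorder_iota Pv) (relorder_iota P) -!map_comp; apply/eq_map => x /=.
by rewrite addnK.
Qed.

Lemma relorder_perm w m0 m : perm_eq w (iota m0 m) -> perm_eq (relorder w) (iota 0 m).
Proof.
move=> P; rewrite (relorder_iota P).
have bw : forall x, x \in w -> m0 <= x < m0 + m by move=> x; rewrite (perm_mem P) mem_iota.
apply: perm_iota_of.
- rewrite map_inj_in_uniq; first by rewrite (perm_uniq P) iota_uniq.
  move=> x y hx hy; have := bw x hx; have := bw y hy; lia.
- by rewrite size_map (perm_size P) size_iota.
- move=> x /mapP [y /bw hy ->]; lia.
Qed.

Lemma aop_sigp a b c n (Hn : a + b + c + 2 = n) (h : H3 a b c) (pi : {perm 'I_n}) :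
  agree n (sig h) (arr_of_perm pi) (arr_of_perm (pi * sigp Hn h)).
Proof.
move=> j hj; have [i ->] := aop_at pi hj.
by rewrite !aop_ord permM sigp_val.
Qed.

Lemma subarr_agree n sig (Y Y' : arr) s len : agree n sig Y Y' -> 1 <= s -> s + len <= n.+1 ->
  subarr Y' s len = map sig (subarr Y s len).
Proof.
move=> ag h1 h2; rewrite /subarr -map_comp; apply/eq_in_map => x; rewrite mem_iota => hx /=.
apply: ag; lia.
Qed.

Lemma yequiv a b c n (Hn : a + b + c + 2 = n) (h : H3 a b c) (pi : {perm 'I_n}) :
  ypart pi = (a.+1, a + b + 2) ->
  [/\ ypart (pi * sigp Hn h) = (a.+1, a + b + 2),
      ypatterns (pi * sigp Hn h) = act h (ypatterns pi) &
      [/\ perm_eq (ypatterns pi).1.1 (iota 0 a), perm_eq (ypatterns pi).1.2 (iota 0 b) &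
          perm_eq (ypatterns pi).2 (iota 0 c)]].
Proof.
rewrite /ypart /ypatterns.
set A := arr_of_perm pi; set B := arr_of_perm (pi * sigp Hn h).
case E: (yaroslavskiy A 1 n) => [[Y l] g] [El Eg].
have n2 : 2 <= n by lia.
have injA : injon n A := @aop_injon n pi.
have rngA : rngon n A := @aop_rngon n pi.
have [El' Eg' pq qn [B1 B2 B3]] := yar_correct n2 injA rngA E.
have Ep : minn (A 1) (A n) = a by lia.
have Eq : maxn (A 1) (A n) = a + b + 1 by lia.
have [Y' E' ag'] : exists2 Y', yaroslavskiy B 1 n = (Y', l, g) & agree n (sig h) Y Y'.
  apply: (yar_eqv n2 injA rngA (@aop_sigp a b c n Hn h pi)) => //.
  - have : A 1 = a \/ A 1 = a + b + 1 by lia.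
    by case=> ->; rewrite ?sig_fix_a ?sig_fix_q.
  - have : A n = a \/ A n = a + b + 1 by lia.
    by case=> ->; rewrite ?sig_fix_a ?sig_fix_q.
  - by move=> x; rewrite Ep; case: (sig_cmp h x).
  - by move=> x; rewrite Eq; case: (sig_cmp h x).
  - by move=> x; rewrite Eq; case: (sig_cmp h x).
rewrite E'; rewrite El Eg in B1 B2 B3 *; rewrite Ep Eq in B1 B2 B3.
have e1 : a.+1 - 1 = a by lia. have e2 : a + b + 2 - a.+1 - 1 = b by lia.
have e3 : n - (a + b + 2) = c by lia. have e4 : a + b + 1 - a - 1 = b by lia.
have e5 : (a + b + 1).+1 = a + b + 2 by lia.
rewrite e1 e2 e3 in B1 B2 B3 *; rewrite e4 e5 in B2 B3.
split => //; last first.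
  by split; [apply: (relorder_perm B1) | apply: (relorder_perm B2) | apply: (relorder_perm B3)].
rewrite /act /= !(fun s len => @subarr_agree n (sig h) Y Y' s len ag'); try lia.
congr (_, _, _).
- rewrite -(relorder_shift (f := ext h.1.1) B1 (@ext_lt _ h.1.1) (@ext_inj _ h.1.1)).
  congr relorder; apply/eq_in_map => x; rewrite (perm_mem B1) mem_iota => hx.
  have [r _ _ _ _] := sig_reg h x; have [-> _] := r ltac:(lia); by rewrite subn0 addn0.
- rewrite -(relorder_shift (f := ext h.1.2) B2 (@ext_lt _ h.1.2) (@ext_inj _ h.1.2)).
  congr relorder; apply/eq_in_map => x; rewrite (perm_mem B2) mem_iota => hx.
  have [_ _ r _ _] := sig_reg h x; have [-> _] := r ltac:(lia); lia.
- rewrite -(relorder_shift (f := ext h.2) B3 (@ext_lt _ h.2) (@ext_inj _ h.2)).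
  congr relorder; apply/eq_in_map => x; rewrite (perm_mem B3) mem_iota => hx.
  have [_ _ _ _ r] := sig_reg h x; have [-> _] := r ltac:(lia); lia.
Qed.

Lemma perm_of_seq m (u : seq nat) : perm_eq u (iota 0 m) ->
  exists p : {perm 'I_m}, map (ext p) (iota 0 m) = u.
Proof.
move=> P.
have sz : size u = m by rewrite (perm_size P) size_iota.
have bu : forall i, i < m -> nth 0 u i < m.
  move=> i hi; have : nth 0 u i \in u by rewrite mem_nth // sz.
  by rewrite (perm_mem P) mem_iota.
pose f (i : 'I_m) : 'I_m := insubd i (nth 0 u i).
have fv : forall i, val (f i) = nth 0 u i by move=> i; rewrite val_insubd bu.
have fi : injective f.
  move=> i j /(congr1 val); rewrite !fv => /eqP.
  rewrite nth_uniq ?sz ?(perm_uniq P) ?iota_uniq // => /eqP; exact: val_inj.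
exists (perm fi).
rewrite -[RHS](mkseq_nth 0 u) sz /mkseq; apply/eq_in_map => x; rewrite mem_iota => hx.
have -> : x = val (Ordinal (hx : x < m)) by [].
by rewrite ext_ord permE fv.
Qed.

Lemma exists_h m (s t : seq nat) : perm_eq s (iota 0 m) -> perm_eq t (iota 0 m) ->
  exists h : {perm 'I_m}, map (ext h) s = t.
Proof.
move=> Ps Pt; have [ps Es] := perm_of_seq Ps; have [pt Et] := perm_of_seq Pt.
exists (ps^-1 * pt)%g; rewrite -Es -Et -map_comp; apply/eq_map => x /=.
by rewrite ext_mul ext_inv.
Qed.

Lemma ext_eq_perm m (s : seq nat) (h h' : {perm 'I_m}) : perm_eq s (iota 0 m) ->
  map (ext h) s = map (ext h') s -> h = h'.
Proof.
move=> P /eq_in_map E; apply/permP => i; apply: val_inj.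
have := E i; rewrite !ext_ord; apply; by rewrite (perm_mem P) mem_iota /=.
Qed.

Theorem lemma4p1 (n : nat) (hn : 2 <= n) (ip iq : nat)
    (s1 s2 s3 : seq nat)
    (h1 : perm_eq s1 (iota 0 (ip - 1)))
    (h2 : perm_eq s2 (iota 0 (iq - ip - 1)))
    (h3 : perm_eq s3 (iota 0 (n - iq))) :
  #|[set pi : {perm 'I_n} | (ypart pi == (ip, iq)) && (ypatterns pi == (s1, s2, s3))]|
    * ((ip - 1)`! * (iq - ip - 1)`! * (n - iq)`!)
  = #|[set pi : {perm 'I_n} | ypart pi == (ip, iq)]|.
Proof.
set F := [set pi : {perm 'I_n} | ypart pi == (ip, iq)].
set T := [set pi : {perm 'I_n} | _ && _].
have TF : T \subset F by apply/subsetP => pi; rewrite !inE => /andP[].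
case: (set_0Vmem F) => [F0 | [pi0 pi0F]].
  move: TF; rewrite F0 subset0 => /eqP ->; by rewrite !cards0.
have [Eip Eiq] : ip = (ip - 1).+1 /\ iq = (ip - 1) + (iq - ip - 1) + 2.
  move: pi0F; rewrite inE /ypart.
  case E: (yaroslavskiy (arr_of_perm pi0) 1 n) => [[Y l] g] /eqP [<- <-].
  have [-> -> pq qn _] := yar_correct hn (@aop_injon n pi0) (@aop_rngon n pi0) E.
  lia.
have Hn : (ip - 1) + (iq - ip - 1) + (n - iq) + 2 = n.
  move: pi0F; rewrite inE /ypart.
  case E: (yaroslavskiy (arr_of_perm pi0) 1 n) => [[Y l] g] /eqP [El Eg].
  have [El2 Eg2 pq qn _] := yar_correct hn (@aop_injon n pi0) (@aop_rngon n pi0) E.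
  lia.
move: h1 h2 h3 Hn TF; rewrite /F /T Eip Eiq; clear F T pi0 pi0F Eip Eiq.
set a := ip - 1; set b := iq - ip - 1.
rewrite (_ : a.+1 - 1 = a); last lia.
rewrite (_ : a + b + 2 - a.+1 - 1 = b); last lia.
set c := n - (a + b + 2).
clearbody a b c => h1 h2 h3 Hn TF.
set T := [set pi : {perm 'I_n} | (ypart pi == (a.+1, a + b + 2)) && (ypatterns pi == (s1, s2, s3))] in TF *.
set F := [set pi : {perm 'I_n} | ypart pi == (a.+1, a + b + 2)] in TF *.
pose Phi (x : H3 a b c * {perm 'I_n}) := (x.2 * sigp Hn x.1)%g.
have inF : forall pi, (pi \in F) = (ypart pi == (a.+1, a + b + 2)) by move=> pi; rewrite inE.
have inT : forall pi, (pi \in T) = (ypart pi == (a.+1, a + b + 2)) && (ypatterns pi == (s1, s2, s3)).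
  by move=> pi; rewrite inE.
have EF : F = Phi @: setX [set: H3 a b c] T.
  apply/setP => pi'; apply/idP/imsetP.
    rewrite inF => /eqP Fp.
    have [_ _ [v1 v2 v3]] := yequiv Hn (1, 1, 1)%g Fp.
    have [g1 e1] := exists_h h1 v1; have [g2 e2] := exists_h h2 v2.
    have [g3 e3] := exists_h h3 v3.
    pose h : H3 a b c := (g1, g2, g3).
    exists (h, pi' * sigp Hn (hinv h))%g.
      rewrite inE /= in_setT /= inT.
      have [Fp2 Pp2 _] := yequiv Hn (hinv h) Fp.
      rewrite Fp2 eqxx /=.
      have [_ Pp3 _] := yequiv Hn h Fp2.
      rewrite -mulgA sigp_hinv mulg1 in Pp3.
      apply/eqP; move: Pp3.
      case: (ypatterns (pi' * sigp Hn (hinv h))%g) => [[t1 t2] t3].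
      rewrite /act /=; case: (ypatterns pi') e1 e2 e3 => [[u1 u2] u3] /= <- <- <- [].
      by move=> /inj_map E1 /inj_map E2 /inj_map E3;
        rewrite (E1 (@ext_inj _ g1)) (E2 (@ext_inj _ g2)) (E3 (@ext_inj _ g3)).
    by rewrite /Phi /= -mulgA sigp_hinv mulg1.
  case=> [[h pi]]; rewrite inE /= in_setT /= inT => /andP[/eqP Fp _] ->.
  by rewrite inF /Phi /=; have [-> _ _] := yequiv Hn h Fp.
rewrite EF card_in_imset; last first.
  move=> [h pi] [h' pi']; rewrite !inE /=.
  move=> /andP[/eqP Fp /eqP Pp] /andP[/eqP Fp' /eqP Pp'] E; rewrite /Phi /= in E.
  have [_ Q _] := yequiv Hn h Fp; have [_ Q' _] := yequiv Hn h' Fp'.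
  rewrite E Q' Pp Pp' /act /= in Q; case: Q => Q1 Q2 Q3.
  have eh : h = h'.
    case: h h' Q1 Q2 Q3 {E Q'} => [[g1 g2] g3] [[g1' g2'] g3'] /= Q1 Q2 Q3.
    by rewrite (ext_eq_perm h1 Q1) (ext_eq_perm h2 Q2) (ext_eq_perm h3 Q3).
  by rewrite -eh in E *; move/mulIg: E => ->.
rewrite cardsX cardsT !card_prod !card_Sn mulnC.
by [].
Qed.
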